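(* There is a constant $c>0$ such that for all $n$, any family of pairwise disjoint $[1,n]$-rectangles whose union is $\mathcal{L}_n$ has at least $2^{cn}$ members.
   Context: $X=\{x_1,\dots,x_n\}$, $Y=\{y_1,\dots,y_n\}$, $Z=X\cup Y$. $\mathcal{L}_n=\{U\subseteq Z : \exists i\in[n],\ x_i\in U,\ y_i\in U\}$. A $[1,n]$-rectangle is a family $S\times T=\{U\cup V: U\in S, V\in T\}$ with $S\subseteq\mathcal{P}(X)$ and $T\subseteq\mathcal{P}(Y)$. *)

(* Defs.v *)
From Stdlib Require Import Reals.
From mathcomp Require Import all_boot.
Set Implicit Arguments. Unset Strict Implicit. Unset Printing Implicit Defensive.

(* Ground set Z = X ∪ Y with X = {x_1..x_n}, Y = {y_1..y_n}:
   inl i stands for x_i, inr i stands for y_i (so X and Y are disjoint). *)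
Definition Zt (n : nat) : finType := ('I_n + 'I_n)%type.

Definition Xset (n : nat) : {set Zt n} := [set inl i | i : 'I_n].
Definition Yset (n : nat) : {set Zt n} := [set inr i | i : 'I_n].

Definition Ln (n : nat) : {set {set Zt n}} :=
  [set U : {set Zt n} | [exists i : 'I_n, (inl i \in U) && (inr i \in U)]].

Definition rect (n : nat) (S T : {set {set Zt n}}) : {set {set Zt n}} :=
  [set U :|: V | U in S, V in T].

Definition is_rect (n : nat) (R : {set {set Zt n}}) : Prop :=
  exists S T : {set {set Zt n}},
    [/\ S \subset powerset (Xset n), T \subset powerset (Yset n) & R = rect S T].

(* Main.v *)
Require Import Defs.
From Stdlib Require Import Reals.
From mathcomp Require Import all_boot all_algebra.
Import GRing.Theory.
Set Implicit Arguments. Unset Strict Implicit. Unset Printing Implicit Defensive.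

Section S.
Variable n : nat.

Definition As (s : {set 'I_n}) : {set Zt n} := [set inl i | i in s].
Definition Bs (t : {set 'I_n}) : {set Zt n} := [set inr i | i in ~: t].

Lemma inX (z : Zt n) : (z \in Xset n) = (if z is inl _ then true else false).
Proof.
case: z => i; apply/imsetP.
  by exists i.
by case.
Qed.

Lemma inY (z : Zt n) : (z \in Yset n) = (if z is inr _ then true else false).
Proof.
case: z => i; apply/imsetP.
  by case.
by exists i.
Qed.

Lemma inlA s i : (inl i \in As s) = (i \in s).
Proof. apply/imsetP/idP => [[j Hj [->]]//|Hi]; by exists i. Qed.
Lemma inrA s i : (inr i \in As s) = false.
Proof. by apply/imsetP => -[]. Qed.
Lemma inlB t i : (inl i \in Bs t) = false.
Proof. by apply/imsetP => -[]. Qed.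
Lemma inrB t i : (inr i \in Bs t) = (i \notin t).
Proof. apply/imsetP/idP => [[j Hj [->]]|Hi]; first by rewrite -in_setC.
by exists i; rewrite ?in_setC. Qed.

Lemma AsX s : As s \subset Xset n.
Proof. by apply/subsetP => -[] i; rewrite ?inlA ?inrA inX. Qed.
Lemma BsY t : Bs t \subset Yset n.
Proof. by apply/subsetP => -[] i; rewrite ?inlB ?inrB inY. Qed.

Lemma entryL s t : (As s :|: Bs t \in Ln n) = ~~ (s \subset t).
Proof.
rewrite inE; apply/existsP/subsetPn.
  by move=> [i]; rewrite !inE inlA inlB inrA inrB orbF /= => /andP[H1 H2]; exists i.
by move=> [i H1 H2]; exists i; rewrite !inE inlA inlB inrA inrB orbF /= H1 H2.
Qed.

Lemma decomp (U U' V V' : {set Zt n}) : U \subset Xset n -> U' \subset Xset n ->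
  V \subset Yset n -> V' \subset Yset n -> U :|: V = U' :|: V' -> U = U' /\ V = V'.
Proof.
move=> /subsetP hU /subsetP hU' /subsetP hV /subsetP hV' E.
split; apply/setP => z.
  have : (z \in U :|: V) = (z \in U' :|: V') by rewrite E.
  rewrite !inE.
  case: z => i Hz.
    have: inl i \notin V by apply/negP => /hV; rewrite inY.
    have: inl i \notin V' by apply/negP => /hV'; rewrite inY.
    by move=> /negbTE h1 /negbTE h2; move: Hz; rewrite h1 h2 !orbF.
  have: inr i \notin U by apply/negP => /hU; rewrite inX.
  have: inr i \notin U' by apply/negP => /hU'; rewrite inX.
  by move=> /negbTE h1 /negbTE h2; move: Hz; rewrite h1 h2.
have : (z \in U :|: V) = (z \in U' :|: V') by rewrite E.
  rewrite !inE.
case: z => i Hz.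
  have: inl i \notin V by apply/negP => /hV; rewrite inY.
  have: inl i \notin V' by apply/negP => /hV'; rewrite inY.
  by move=> /negbTE h1 /negbTE h2; move: Hz; rewrite h1 h2.
have: inr i \notin U by apply/negP => /hU; rewrite inX.
have: inr i \notin U' by apply/negP => /hU'; rewrite inX.
by move=> /negbTE h1 /negbTE h2; move: Hz; rewrite h1 h2.
Qed.

Definition Sp (R : {set {set Zt n}}) : {set {set Zt n}} :=
  [set U | [exists V : {set Zt n}, (V \subset Yset n) && (U :|: V \in R)]].
Definition Tp (R : {set {set Zt n}}) : {set {set Zt n}} :=
  [set V | [exists U : {set Zt n}, (U \subset Xset n) && (U :|: V \in R)]].

Lemma rect_fact R s t : is_rect R ->
  (As s :|: Bs t \in R) = (As s \in Sp R) && (Bs t \in Tp R).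
Proof.
move=> [S [T [HS HT ->]]].
apply/idP/andP.
  move=> H; split; rewrite inE; apply/existsP.
    by exists (Bs t); rewrite BsY H.
  by exists (As s); rewrite AsX H.
rewrite !inE => -[/existsP[V /andP[HV HR1]] /existsP[U /andP[HU HR2]]].
move: HR1 => /imset2P[U0 V0 HU0 HV0 E1].
move: HR2 => /imset2P[U1 V1 HU1 HV1 E2].
have XU0 : U0 \subset Xset n by move: (subsetP HS _ HU0); rewrite powersetE.
have YV0 : V0 \subset Yset n by move: (subsetP HT _ HV0); rewrite powersetE.
have XU1 : U1 \subset Xset n by move: (subsetP HS _ HU1); rewrite powersetE.
have YV1 : V1 \subset Yset n by move: (subsetP HT _ HV1); rewrite powersetE.
have [-> _] := decomp (AsX s) XU0 HV YV0 E1.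
have [_ ->] := decomp HU XU1 (BsY t) YV1 E2.
exact: imset2_f.
Qed.

Local Open Scope ring_scope.
Definition kk := #|{set 'I_n}|.
Definition ev (i : 'I_kk) : {set 'I_n} := enum_val i.

Lemma kk_eq : kk = (2 ^ n)%N.
Proof.
have -> : (2 ^ n)%N = (2 ^ #|[set: 'I_n]|)%N by rewrite cardsT card_ord.
rewrite -card_powerset /kk.
apply: eq_card => A; by rewrite powersetE subsetT.
Qed.

Definition Dm : 'M[rat]_kk := \matrix_(i, j) ((ev i \subset ev j)%:R).

Lemma Dm_free : row_free Dm.
Proof.
apply: inj_row_free => v Hv.
apply/rowP => i; rewrite mxE.
case: (pickP (fun i => v 0 i != 0)) => [i1 Hi1 | H]; last first.
  by have := H i => /= /negbFE/eqP.
exfalso.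
case: (@arg_minnP _ i1 (fun i => v 0 i != 0) (fun i => #|ev i|) Hi1) => i0 Hi0 Hmin.
have : (v *m Dm) 0 i0 = (0 : 'rV[rat]_kk) 0 i0 by rewrite Hv.
rewrite !mxE.
rewrite (bigD1 i0) //= big1 ?addr0.
  by rewrite !mxE subxx mulr1 => E; move: Hi0; rewrite E eqxx.
move=> l Hl; rewrite mxE.
case Hs: (ev l \subset ev i0); last by rewrite mulr0.
have Hp : ev l \proper ev i0.
  rewrite properE Hs /=; apply/negP => Hs2.
  have : ev l = ev i0 by apply/eqP; rewrite eqEsubset Hs Hs2.
  by move/enum_val_inj => E; move: Hl; rewrite E eqxx.
case Hv0: (v 0 l == 0); first by rewrite (eqP Hv0) mul0r.
have := Hmin l (negbT Hv0); rewrite leqNgt (proper_card Hp) //.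
Qed.

Lemma rank_sum (I : finType) (P : pred I) (M : I -> 'M[rat]_kk) :
  (forall i, \rank (M i) <= 1)%N -> (\rank (\sum_(i in P) M i)%R <= #|P|)%N.
Proof.
move=> H; rewrite -sum1_card.
apply: (big_ind2 (fun (A : 'M[rat]_kk) m => \rank A <= m)%N).
- by rewrite mxrank0.
- move=> A a B b /= HA HB; exact: leq_trans (mxrank_add A B) (leq_add HA HB).
- by move=> i _; exact: H.
Qed.

Lemma rank_prod (u : 'cV[rat]_kk) (w : 'rV[rat]_kk) : (\rank (u *m w) <= 1)%N.
Proof. apply: leq_trans (mxrankM_maxl u w) _; exact: rank_leq_col. Qed.

Lemma main_count (F : {set {set {set Zt n}}}) :
    (forall R, R \in F -> is_rect R) ->
    (forall R1 R2, R1 \in F -> R2 \in F -> R1 != R2 -> [disjoint R1 & R2]) ->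
    \bigcup_(R in F) R = Ln n ->
    (2 ^ n <= 1 + #|F|)%N.
Proof.
move=> Hr Hd Hu.
pose Jm : 'M[rat]_kk := (const_mx 1 : 'cV_kk) *m (const_mx 1 : 'rV_kk).
pose col R : 'cV[rat]_kk := \col_i ((As (ev i) \in Sp R)%:R).
pose row R : 'rV[rat]_kk := \row_j ((Bs (ev j) \in Tp R)%:R).
pose Pm := \sum_(R in F) (col R *m row R).
have HP : forall i j, Pm i j = (As (ev i) :|: Bs (ev j) \in Ln n)%:R.
  move=> i j; rewrite summxE.
  transitivity (\sum_(R in F) ((As (ev i) :|: Bs (ev j) \in R)%:R : rat)).
    apply: eq_bigr => R HR; rewrite !mxE big_ord1 !mxE -natrM mulnb.
    by rewrite (rect_fact _ _ (Hr R HR)).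
  rewrite -Hu; set x := As (ev i) :|: Bs (ev j).
  case: (boolP (x \in \bigcup_(R in F) R)) => Hx.
    move: (Hx) => /bigcupP[R0 HR0 Hx0].
    rewrite (bigD1 R0) //= Hx0 big1 ?addr0 //.
    move=> R /andP[HR HRn].
    have := Hd R R0 HR HR0 HRn => /disjointFl /(_ Hx0) -> //.
  rewrite big1 // => R HR.
  case Hx1: (x \in R) => //.
  by move: Hx => /bigcupP; case; exists R.
have HD : Dm = Jm - Pm.
  apply/matrixP => i j; rewrite !mxE big_ord1 !mxE HP entryL mulr1.
  by case: (ev i \subset ev j); rewrite ?subr0 ?subrr.
have H1 : (kk <= \rank Dm)%N by rewrite row_leq_rank Dm_free.
have H2 : (\rank Dm <= 1 + #|F|)%N.
  rewrite HD; apply: leq_trans (mxrank_add _ _) _.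
  rewrite mxrank_opp; apply: leq_add; first exact: rank_prod.
  by apply: rank_sum => R; exact: rank_prod.
by rewrite -kk_eq; exact: leq_trans H1 H2.
Qed.
End S.

From Stdlib Require Import Lra.
From mathcomp Require Import zify.

Lemma INR_exp2 (k : nat) : INR (2 ^ k)%N = Rpow_def.pow 2 k.
Proof.
elim: k => [|k IH]; first by rewrite expn0 /=.
by rewrite expnS -multE mult_INR IH /=.
Qed.

Theorem mainTheorem10 :
  exists c : R, Rlt 0 c /\
  exists n0 : nat, forall n : nat, (n0 <= n)%N ->
  forall F : {set {set {set Zt n}}},
    (forall R, R \in F -> is_rect R) ->
    (forall R1 R2, R1 \in F -> R2 \in F -> R1 != R2 -> [disjoint R1 & R2]) ->
    \bigcup_(R in F) R = Ln n ->
    Rle (Rpower 2 (Rmult c (INR n))) (INR #|F|).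
Proof.
exists (Rdiv 1 2); split; first lra.
exists 2%N => n Hn F Hr Hd Hu.
have H := main_count Hr Hd Hu.
have Hn1 : n = (n.-1).+1 by rewrite prednK // (leq_trans _ Hn).
have Hx : (2 ^ n.-1 <= #|F|)%N.
  move: H; rewrite {1}Hn1 expnS.
  have : (0 < 2 ^ n.-1)%N by rewrite expn_gt0.
  move: (2 ^ n.-1)%N => x; move: #|F| => f Hx0 Hle.
  lia.
apply: Rle_trans (_ : Rle (Rpower 2 (INR n.-1)) _).
  apply: Rle_Rpower; first lra.
  have h2 : Rle 2 (INR n) by apply: (le_INR 2); apply/leP.
  have -> : INR n = Rplus (INR n.-1) 1 by rewrite {1}Hn1 S_INR.
  rewrite {1}Hn1 S_INR in h2; lra.
rewrite Rpower_pow; last lra.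
rewrite -INR_exp2; apply: le_INR; exact/leP.
Qed.
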